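(* Let $R\subseteq\{0,1\}^V$ be a delta matroid that is not basically binary, but such that every pinning $R_p$ with $\mathrm{dom}(p)\ne\emptyset$ is basically binary. Then there is $h:V\to\mathbb Z$ such that the $h$-maximisation $R_{h\text{-}\max}$ is equivalent (by renaming variables) to a flip $\mathrm{PM}_3^U$ of $\mathrm{PM}_3=\{(0,0,1),(0,1,0),(1,0,0)\}$ for some $U\subseteq\{1,2,3\}$.
   Context: $R$ is a delta matroid if for all $x,y\in R$ and all $i$ with $x_i\ne y_i$ there exists $j$ with $x_j\ne y_j$ (possibly $j=i$) such that $x^{\{i,j\}}\in R$, where $x^U$ is $x$ with coordinates in $U$ flipped. A relation is basically binary if it is equivalent (up to renaming variables) to a Cartesian product of relations of arity at most two. A partial configuration $p$ is an element of $\{0,1\}^{\mathrm{dom}(p)}$ with $\mathrm{dom}(p)\subseteq V$, and $R_p=\{x\in\{0,1\}^{V\setminus\mathrm{dom}(p)}:(x,p)\in R\}$. For $h:V\to\mathbb Z$, $R_{h\text{-}\max}=\{x\in R:\sum_i h_ix_i=\max_{y\in R}\sum_ih_iy_i\}$. The flip of a relation $S$ is $S^U=\{x: x^U\in S\}$. *)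

(* Defs.v *)
From HB Require Import structures.
From mathcomp Require Import all_boot all_order all_algebra.
Set Implicit Arguments. Unset Strict Implicit. Unset Printing Implicit Defensive.
Import Order.TTheory GRing.Theory Num.Theory.

(* A Boolean relation on the (finite) variable set V: a subset of {0,1}^V,
   with 0/1 encoded as false/true. *)
Notation relation V := {set {ffun V -> bool}}.

Definition flipc (V : finType) (x : {ffun V -> bool}) (U : {set V}) : {ffun V -> bool} :=
  [ffun v => x v (+) (v \in U)].

Definition flip_rel (V : finType) (S : relation V) (U : {set V}) : relation V :=
  [set x : {ffun V -> bool} | flipc x U \in S].

Definition delta_matroid (V : finType) (R : relation V) : Prop :=
  forall x y, x \in R -> y \in R -> forall i, x i != y i ->
    exists j, x j != y j /\ flipc x [set i; j] \in R.

(* Basically binary: R equals a Cartesian product of relations of arity at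
   most two, i.e. there are pairwise disjoint blocks B_k of size <= 2 covering
   V and relations S_k depending only on the coordinates in B_k, such that
   R is the set of x with x|_{B_k} in S_k for every k. (Factors are given as
   sets of full assignments that only depend on the block coordinates.) *)
Definition basically_binary (V : finType) (R : relation V) : Prop :=
  exists blocks : seq ({set V} * relation V),
    [/\ forall k, k < size blocks -> #|(nth (set0, set0) blocks k).1| <= 2,
        forall k l, k < size blocks -> l < size blocks -> k != l ->
          [disjoint (nth (set0, set0) blocks k).1 & (nth (set0, set0) blocks l).1],
        forall v : V, exists2 b, b \in blocks & v \in b.1,
        forall b, b \in blocks -> forall x y : {ffun V -> bool},
          (forall v, v \in b.1 -> x v = y v) -> (x \in b.2) = (y \in b.2)
      & R = [set x : {ffun V -> bool} | all (fun b : {set V} * relation V => x \in b.2) blocks]].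

(* Pinning R_p, for the partial configuration p with dom(p) = D and values
   given by a on D; R_p is a relation on the variables V \ D. *)
Definition glue (V : finType) (D : {set V}) (a : {ffun V -> bool})
    (y : {ffun {v : V | v \notin D} -> bool}) : {ffun V -> bool} :=
  [ffun v => if insub v is Some u then y u else a v].

Definition pinning (V : finType) (R : relation V) (D : {set V}) (a : {ffun V -> bool})
  : relation {v : V | v \notin D} :=
  [set y : {ffun {v : V | v \notin D} -> bool} | @glue V D a y \in R].

Definition hweight (V : finType) (h : V -> int) (x : {ffun V -> bool}) : int :=
  (\sum_(v : V) h v * (x v)%:R)%R.

Definition hmax (V : finType) (R : relation V) (h : V -> int) : relation V :=
  [set x in R | [forall y in R, (hweight h y <= hweight h x)%R]].

Definition PM3 : relation 'I_3 := [set x : {ffun 'I_3 -> bool} | #|[set i | x i]| == 1].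

Definition equiv_rename (V W : finType) (S : relation V) (T : relation W) : Prop :=
  exists f : W -> V, bijective f /\
    S = [set x : {ffun V -> bool} | [ffun w => x (f w)] \in T].

(* Main.v *)
Require Import Defs.
From HB Require Import structures.
From mathcomp Require Import all_boot all_order all_algebra.
From Stdlib Require FunctionalExtensionality.
Set Implicit Arguments. Unset Strict Implicit. Unset Printing Implicit Defensive.

Section Gen.
Variable V : finType.
Implicit Types (R T : relation V) (x y z w : {ffun V -> bool}).

Definition mix (S : {set V}) x z : {ffun V -> bool} := [ffun v => if v \in S then x v else z v].

Definition coupledAt R w i j :=
  [&& i != j, w \in R, flipc w [set i; j] \in R & ~~ ((flipc w [set i] \in R) && (flipc w [set j] \in R))].

Definition coupledb R i j := [exists w, coupledAt R w i j].

Lemma coupledAtC R w i j : coupledAt R w i j -> coupledAt R w j i.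
Proof.
case/and4P=> ij wR fR nf; apply/and4P; split => //; first by rewrite eq_sym.
  by rewrite setUC.
by rewrite andbC.
Qed.

Lemma flipcE x S v : flipc x S v = x v (+) (v \in S).
Proof. by rewrite ffunE. Qed.

Lemma mixE S x z v : mix S x z v = if v \in S then x v else z v.
Proof. by rewrite ffunE. Qed.

Lemma sep_lemma R (X : {set V}) : delta_matroid R ->
  (forall w i j, w \in R -> i \in X -> j \notin X -> flipc w [set i; j] \in R -> flipc w [set i] \in R) ->
  forall x z, x \in R -> z \in R -> mix X x z \in R.
Proof.
move=> dm H x z xR zR.
move: {2}#|[set i in X | x i != z i]| (leqnn #|[set i in X | x i != z i]|) => n.
elim: n z zR => [|n IH] z zR Hn.
  suff -> : mix X x z = z by [].
  apply/ffunP => v; rewrite mixE; case: ifP => // vX.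
  apply/eqP; apply: contraT => nv.
  by move: Hn; rewrite leqn0 cards_eq0 => /eqP/setP/(_ v); rewrite !inE vX nv.
have [Hle|Hgt] := leqP #|[set i in X | x i != z i]| n; first exact: IH.
have [i] : exists i, i \in [set i in X | x i != z i].
  by apply/set0Pn; rewrite -card_gt0; apply: leq_ltn_trans Hgt.
rewrite inE => /andP[iX xzi].
have zxi : z i != x i by rewrite eq_sym.
have [j [zj fR]] := dm z x zR xR i zxi.
have key : forall z', z' \in R -> (forall v, v \notin X -> z' v = z v) -> z' i = x i ->
    (forall k, k \in X -> k != i -> x k != z' k -> x k != z k) -> mix X x z \in R.
  move=> z' z'R e1 e2 e3.
  have -> : mix X x z = mix X x z'.
    by apply/ffunP => v; rewrite !mixE; case: ifP => // /negbT /e1 ->.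
  apply: IH z'R _.
  have sub : [set k in X | x k != z' k] \subset [set k in X | x k != z k] :\ i.
    apply/subsetP => k; rewrite !inE; case/andP => kX xk.
    have ki : k != i by apply: contraNneq xk => ->; rewrite e2.
    by rewrite ki kX e3.
  have := subset_leq_card sub => le.
  have := cardsD1 i [set k in X | x k != z k]; rewrite !inE iX xzi /= add1n => ee.
  rewrite ee in Hn.
  by rewrite -ltnS; apply: leq_trans le _.
have [jX|jX] := boolP (j \in X).
- apply: (key _ fR).
  + move=> v vX; rewrite flipcE !inE; case: (v =P i) => [ev|_]; first by rewrite ev iX in vX.
    case: (v =P j) => [ev|_] /=; [by rewrite ev jX in vX | by rewrite addbF].
  + rewrite flipcE !inE eqxx /=; move: xzi; case: (x i); case: (z i) => //.
  + move=> k kX ki; rewrite flipcE !inE (negPf ki) /=.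
    case: (k =P j) => [->|_]; last by rewrite addbF.
    by move: zj; case: (x j); case: (z j).
- have fR' := H z i j zR iX jX fR.
  apply: (key _ fR').
  + move=> v vX; rewrite flipcE !inE; case: (v =P i) => [ev|_]; first by rewrite ev iX in vX.
    by rewrite addbF.
  + rewrite flipcE !inE eqxx /=; move: xzi; case: (x i); case: (z i) => //.
  + by move=> k kX ki; rewrite flipcE !inE (negPf ki) /= addbF.
Qed.

Lemma coupledbC R i j : coupledb R i j -> coupledb R j i.
Proof. by case/existsP => w /coupledAtC c; apply/existsP; exists w. Qed.

Section BB.
Variable R : relation V.
Hypothesis dm : delta_matroid R.
Hypothesis H : forall a b c, coupledb R a b -> coupledb R b c -> a = c.

Definition Pb v := [set u | (u == v) || coupledb R v u].
Definition proj (B : {set V}) : relation V :=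
  [set x : {ffun V -> bool} | [exists y in R, [forall u in B, x u == (y : {ffun V -> bool}) u]]].

Lemma partner_uniq v u1 u2 : coupledb R v u1 -> coupledb R v u2 -> u1 = u2.
Proof. by move/coupledbC; apply: H. Qed.

Lemma coupled_neq i j : coupledb R i j -> i != j.
Proof. by case/existsP => w /and4P[]. Qed.

Lemma Pb_same v u : u \in Pb v -> Pb v = Pb u.
Proof.
rewrite inE => /orP[/eqP->//|cvu].
apply/setP => t; rewrite !inE.
apply/idP/idP.
- case/orP=> [/eqP->|cvt]; first by rewrite (coupledbC cvu) orbT.
  by rewrite (partner_uniq cvu cvt) eqxx.
- case/orP=> [/eqP->|cut]; first by rewrite cvu orbT.
  by rewrite (H cvu cut) eqxx.
Qed.

Lemma Pb_card v : #|Pb v| <= 2.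
Proof.
case: (pickP (coupledb R v)) => [u cu|nc].
  have : Pb v \subset [set v; u].
    apply/subsetP => t; rewrite !inE => /orP[->//|cvt].
    by rewrite (partner_uniq cu cvt) eqxx orbT.
  move/subset_leq_card => le; apply: leq_trans le _.
  by rewrite cards2; case: (v != u).
have : Pb v \subset [set v].
  by apply/subsetP => t; rewrite !inE nc orbF.
by move/subset_leq_card; rewrite cards1 => /leq_trans; apply.
Qed.


Lemma Pb_self v : v \in Pb v.
Proof. by rewrite !inE eqxx. Qed.

Lemma Pb_sep v x z : x \in R -> z \in R -> mix (Pb v) x z \in R.
Proof.
apply: sep_lemma => // w i j wR iP jP fR.
apply: contraT => nfi.
have cij : coupledb R i j.
  apply/existsP; exists w; apply/and4P; split => //.
  - by apply: contraNneq jP => <-.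
  - by rewrite (negPf nfi).
move: jP; rewrite (Pb_same iP) inE cij orbT.
done.
Qed.

Definition blocks := undup [seq (Pb v, proj (Pb v)) | v <- enum V].

Lemma blocksP b : b \in blocks -> exists v, b = (Pb v, proj (Pb v)).
Proof. by rewrite mem_undup => /mapP[v _ ->]; exists v. Qed.

Lemma Pb_disj v u : Pb v != Pb u -> [disjoint Pb v & Pb u].
Proof.
move=> ne; apply/pred0P => t /=; apply/negbTE; apply/negP => /andP[tv tu].
by move: ne; rewrite (Pb_same tv) (Pb_same tu) eqxx.
Qed.

Lemma bb_of_nopath : R != set0 -> basically_binary R.
Proof.
move=> Rne; exists blocks; split.
- move=> k ks; have /blocksP[v ->] := mem_nth (set0, set0) ks; exact: Pb_card.
- move=> k l ks ls kl.
  have := mem_nth (set0, set0) ks; have := mem_nth (set0, set0) ls.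
  move=> /blocksP[u eu] /blocksP[v ev].
  have ne : nth (set0, set0) blocks k != nth (set0, set0) blocks l.
    by rewrite nth_uniq ?undup_uniq.
  rewrite ev eu in ne *; apply: Pb_disj; apply: contraNneq ne => ->. done.
- move=> v; exists (Pb v, proj (Pb v)); last exact: Pb_self.
  by rewrite mem_undup; apply: map_f; rewrite mem_enum.
- move=> b /blocksP[v ->] x y /= exy.
  rewrite !inE; apply: eq_existsb => t; congr (_ && _); apply: eq_forallb => u.
  by case: (boolP (u \in Pb v)) => //= uP; rewrite exy.
- apply/setP => x; rewrite inE; apply/idP/idP.
  + move=> xR; apply/allP => b /blocksP[v ->] /=; rewrite inE.
    by apply/existsP; exists x; rewrite xR; apply/forallP => u; apply/implyP.
  + move=> /allP Hx.
    have : forall s : seq V, exists2 z, z \in R & forall u, u \in s -> z u = x u.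
      elim => [|v s [z zR Hz]].
        by case/set0Pn: Rne => z zR; exists z.
      have : x \in proj (Pb v).
        apply: (Hx (Pb v, proj (Pb v))); rewrite mem_undup; apply: map_f; exact: mem_enum.
      rewrite inE => /existsP[y /andP[yR /forallP Hy]].
      exists (mix (Pb v) y z); first exact: Pb_sep.
      move=> u; rewrite inE mixE; case: ifP => uP.
        by move=> _; move/implyP: (Hy u) => /(_ uP) /eqP.
      case/orP=> [/eqP eu|us]; last exact: Hz.
      by rewrite eu Pb_self in uP.
    case/(_ (enum V)) => z zR Hz.
    suff <- : z = x by [].
    by apply/ffunP => u; apply: Hz; rewrite mem_enum.
Qed.

End BB.

Lemma bb_empty R : R = set0 -> basically_binary R.
Proof.
move=> ->.
exists ((set0, set0) :: [seq ([set v], [set: {ffun V -> bool}]) | v <- enum V]); split.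
- case=> [|k] /=; first by rewrite cards0.
  rewrite size_map ltnS => ks.
  have [v0 _] : exists v0 : V, true by move: ks; case: (enum V) => // v s _; exists v.
  by rewrite (nth_map v0) // cards1.
- case=> [|k] [|l] ks ls kl //; [by rewrite /= -setI_eq0 set0I | by rewrite /= -setI_eq0 setI0 |].
  have ks' : k < size (enum V) by rewrite -(size_map (fun v => ([set v], [set: {ffun V -> bool}]))); exact: ks.
  have ls' : l < size (enum V) by rewrite -(size_map (fun v => ([set v], [set: {ffun V -> bool}]))); exact: ls.
  have [v0 _] : exists v0 : V, true by move: ks'; case: (enum V) => // v s _; exists v.
  change [disjoint (nth (set0, set0) [seq ([set v], [set: {ffun V -> bool}]) | v <- enum V] k).1 &
    (nth (set0, set0) [seq ([set v], [set: {ffun V -> bool}]) | v <- enum V] l).1].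
  rewrite (nth_map v0 _ _ ks') (nth_map v0 _ _ ls') /=.
  apply/pred0P => t /=; rewrite !inE; apply/negP => /andP[/eqP -> /eqP].
  move/eqP; rewrite nth_uniq ?enum_uniq // => /eqP ekl; by rewrite ekl eqxx in kl.
- move=> v; exists ([set v], setT); last by rewrite inE.
  by rewrite inE; apply/orP; right; apply: map_f; rewrite mem_enum.
- move=> b; rewrite inE => /orP[/eqP->|/mapP[v _ ->]] //= x y _; by rewrite !inE.
- by apply/setP => x; rewrite !inE /= inE.
Qed.

Lemma bb_block_sep T (bl : seq ({set V} * relation V)) b :
  (forall k l, k < size bl -> l < size bl -> k != l ->
          [disjoint (nth (set0, set0) bl k).1 & (nth (set0, set0) bl l).1]) ->
  (forall b, b \in bl -> forall x y : {ffun V -> bool},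
          (forall v, v \in b.1 -> x v = y v) -> (x \in b.2) = (y \in b.2)) ->
  T = [set x : {ffun V -> bool} | all (fun b : {set V} * relation V => x \in b.2) bl] ->
  b \in bl -> forall x z, x \in T -> z \in T -> mix b.1 x z \in T.
Proof.
move=> Hd Hf -> bin x z; rewrite !inE => /allP Hx /allP Hz.
apply/allP => b' b'in.
have kb := index_mem b bl; rewrite bin in kb.
have kb' := index_mem b' bl; rewrite b'in in kb'.
have [e|ne] := eqVneq (index b bl) (index b' bl).
  have eb : b = b'.
    by rewrite -(nth_index (set0, set0) bin) -(nth_index (set0, set0) b'in) e.
  rewrite -eb (Hf b bin _ x) ?Hx //.
  by move=> v vb; rewrite mixE vb.
have := Hd _ _ kb kb' ne; rewrite !nth_index // => dj.
rewrite (Hf b' b'in _ z) ?Hz //.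
move=> v vb'; rewrite mixE; case: ifP => // vb.
by move: dj => /pred0P /(_ v) /=; rewrite vb vb'.
Qed.

Lemma bb_coupled T w i j : basically_binary T -> coupledAt T w i j ->
  (forall x z, x \in T -> z \in T -> mix [set i; j] x z \in T) /\
  (forall w' k, coupledAt T w' j k -> k = i).
Proof.
move=> [bl [Hc Hd Hcov Hf HT]] cw.
have sep := bb_block_sep Hd Hf HT.
have inblk : forall w0 p q b, coupledAt T w0 p q -> b \in bl -> q \in b.1 -> p \in b.1.
  move=> w0 p q b /and4P[pq w0T fT nf] bin qb; apply: contraT => pb.
  move: nf; rewrite negb_and => /orP[] /negP Hn; exfalso; apply: Hn.
  - have -> : flipc w0 [set p] = mix b.1 w0 (flipc w0 [set p; q]).
      apply/ffunP => v; rewrite mixE !flipcE !inE.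
      case: ifP => vb.
        have vp : (v == p) = false by apply/eqP => e; rewrite -e vb in pb.
        by rewrite vp addbF.
      have vq : (v == q) = false by apply/eqP => e; rewrite e qb in vb.
      by rewrite vq orbF.
    exact: sep.
  - have -> : flipc w0 [set q] = mix b.1 (flipc w0 [set p; q]) w0.
      apply/ffunP => v; rewrite mixE !flipcE !inE.
      case: ifP => vb.
        have vp : (v == p) = false by apply/eqP => e; rewrite -e vb in pb.
        by rewrite vp.
      have vq : (v == q) = false by apply/eqP => e; rewrite e qb in vb.
      by rewrite vq addbF.
    exact: sep.
have [b bin jb] := Hcov j.
have ib : i \in b.1 := inblk _ _ _ _ cw bin jb.
have ij : i != j by case/and4P: cw.
have eb : b.1 = [set i; j].
  apply/eqP; rewrite eq_sym eqEcard; apply/andP; split.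
    by apply/subsetP => v; rewrite !inE => /orP[]/eqP->.
  rewrite cards2 ij.
  have := Hc (index b bl); rewrite index_mem bin nth_index //; exact.
split.
  by move=> x z xT zT; rewrite -eb; apply: sep.
move=> w' k cjk.
have kb : k \in b.1 := inblk _ _ _ _ (coupledAtC cjk) bin jb.
move: kb; rewrite eb !inE => /orP[/eqP//|/eqP ekj].
by case/and4P: cjk; rewrite ekj eqxx.
Qed.

End Gen.

Section Pin.
Variable V : finType.
Variables (R : relation V) (D : {set V}) (q : {ffun V -> bool}).
Implicit Types (x y z w : {ffun V -> bool}).

Definition agree x := forall v, v \in D -> x v = q v.
Definition restr x : {ffun {v : V | v \notin D} -> bool} := [ffun u => x (val u)].

Lemma glue_restr x : agree x -> @glue V D q (restr x) = x.
Proof.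
move=> ax; apply/ffunP => v; rewrite /glue ffunE.
case: insubP => [u vD <-|vD]; first by rewrite ffunE.
by rewrite ax //; move/negPn: vD.
Qed.

Lemma pin_mem x : agree x -> (restr x \in pinning R D q) = (x \in R).
Proof. by move=> ax; rewrite inE glue_restr. Qed.

Lemma restr_flip (S : {set V}) x : restr (flipc x S) = flipc (restr x) [set u | val u \in S].
Proof. by apply/ffunP => u; rewrite !ffunE inE. Qed.

Lemma restr_mix (S : {set V}) x z : restr (mix S x z) = mix [set u | val u \in S] (restr x) (restr z).
Proof. by apply/ffunP => u; rewrite !ffunE inE. Qed.

Lemma agree_flip (S : {set V}) x : (forall v, v \in S -> v \notin D) -> agree x -> agree (flipc x S).
Proof.
move=> HS ax v vD; rewrite flipcE ax //.
case: (boolP (v \in S)) => [/HS|_]; [by rewrite vD | by rewrite addbF].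
Qed.

Lemma agree_mix (S : {set V}) x z : agree x -> agree z -> agree (mix S x z).
Proof. by move=> ax az v vD; rewrite mixE; case: ifP => _; [apply: ax|apply: az]. Qed.

Lemma setval2 a b (Ha : a \notin D) (Hb : b \notin D) :
  [set u : {v : V | v \notin D} | val u \in [set a; b]] = [set exist _ a Ha; exist _ b Hb].
Proof. by apply/setP => u; rewrite !inE -!val_eqE. Qed.

Lemma setval1 a (Ha : a \notin D) :
  [set u : {v : V | v \notin D} | val u \in [set a]] = [set exist _ a Ha].
Proof. by apply/setP => u; rewrite !inE -!val_eqE. Qed.

Lemma coupled_restr w a b (Ha : a \notin D) (Hb : b \notin D) :
  agree w -> coupledAt R w a b -> coupledAt (pinning R D q) (restr w) (exist _ a Ha) (exist _ b Hb).
Proof.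
move=> aw /and4P[ab wR fR nf]; apply/and4P; split.
- by rewrite -val_eqE.
- by rewrite pin_mem.
- rewrite -setval2 -restr_flip pin_mem //; apply: agree_flip => //.
  by move=> v; rewrite !inE => /orP[]/eqP->.
- rewrite -setval1 -(setval1 Hb) -!restr_flip !pin_mem //; apply: agree_flip => //;
  by move=> v; rewrite !inE => /eqP->.
Qed.

Hypothesis bbp : basically_binary (pinning R D q).

Lemma pin_sep w a b : a \notin D -> b \notin D -> coupledAt R w a b -> agree w ->
  forall x z, x \in R -> z \in R -> agree x -> agree z -> mix [set a; b] x z \in R.
Proof.
move=> Ha Hb cw aw x z xR zR ax az.
have [sep _] := bb_coupled bbp (coupled_restr Ha Hb aw cw).
rewrite -pin_mem; last exact: agree_mix.
rewrite restr_mix setval2; apply: sep; by rewrite pin_mem.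
Qed.

Lemma pin_nopath w1 w2 a b c : a \notin D -> b \notin D -> c \notin D ->
  coupledAt R w1 a b -> coupledAt R w2 b c -> agree w1 -> agree w2 -> c = a.
Proof.
move=> Ha Hb Hc c1 c2 a1 a2.
have [_ np] := bb_coupled bbp (coupled_restr Ha Hb a1 c1).
have := np _ _ (coupled_restr Hb Hc a2 c2).
by move/(congr1 val).
Qed.
End Pin.

Section Main.
Variable V : finType.
Variable R : relation V.
Hypothesis dm : delta_matroid R.
Hypothesis hpin : forall (D : {set V}) (a : {ffun V -> bool}),
      D != set0 -> basically_binary (pinning R D a).
Implicit Types (x y z w t : {ffun V -> bool}).

Lemma set1_ne0 (v : V) : [set v] != set0.
Proof. by apply/set0Pn; exists v; rewrite inE. Qed.

Lemma agree1 v (q : {ffun V -> bool}) x : x v = q v -> agree [set v] q x.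
Proof. by move=> e u; rewrite inE => /eqP->. Qed.

Lemma flipcC x S T : flipc (flipc x S) T = flipc (flipc x T) S.
Proof. by apply/ffunP => u; rewrite !flipcE -!addbA (addbC (u \in T)). Qed.

Lemma flipcK x S : flipc (flipc x S) S = x.
Proof. by apply/ffunP => u; rewrite !flipcE -addbA addbb addbF. Qed.

Lemma notin1 (u v : V) : u != v -> u \notin [set v].
Proof. by rewrite inE. Qed.

Lemma coupled_mix (D : {set V}) (q : {ffun V -> bool}) a b w t : D != set0 -> a \notin D -> b \notin D ->
  coupledAt R w a b -> agree D q w -> t \in R -> agree D q t ->
  coupledAt R (mix [set a; b] w t) a b.
Proof.
move=> Dne Ha Hb cw aw tR at_.
have sep := pin_sep (hpin q Dne) Ha Hb cw aw.
have abD : forall v, v \in [set a; b] -> v \notin D by move=> v; rewrite !inE => /orP[]/eqP->.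
have aD : forall v, v \in [set a] -> v \notin D by move=> v; rewrite !inE => /eqP->.
have bD : forall v, v \in [set b] -> v \notin D by move=> v; rewrite !inE => /eqP->.
case/and4P: (cw) => ab wR fR nf.
apply/and4P; split => //.
- by apply: sep.
- have -> : flipc (mix [set a; b] w t) [set a; b] = mix [set a; b] (flipc w [set a; b]) t.
    by apply/ffunP => u; rewrite !mixE !flipcE mixE; case: ifP => //; rewrite addbF.
  by apply: sep => //; apply: agree_flip.
- apply: contra nf => /andP[fa fb].
  have ma : agree D q (mix [set a; b] w t) by apply: agree_mix.
  apply/andP; split.
  + have -> : flipc w [set a] = mix [set a; b] (flipc (mix [set a; b] w t) [set a]) w.
      apply/ffunP => u; rewrite !mixE !flipcE !mixE !inE.
      have ba : b != a by rewrite eq_sym.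
      case: (u =P a) => [->|/eqP/negPf ua]; first by rewrite ?eqxx ?(negPf ab) /= ?addbF.
      by case: (u =P b) => [->|/eqP/negPf ub]; rewrite ?eqxx ?ua ?ub ?(negPf ba) /= ?addbF.
    by apply: sep => //; apply: agree_flip.
  + have -> : flipc w [set b] = mix [set a; b] (flipc (mix [set a; b] w t) [set b]) w.
      apply/ffunP => u; rewrite !mixE !flipcE !mixE !inE.
      have ba : b != a by rewrite eq_sym.
      case: (u =P a) => [->|/eqP/negPf ua]; first by rewrite ?eqxx ?(negPf ab) /= ?addbF.
      by case: (u =P b) => [->|/eqP/negPf ub]; rewrite ?eqxx ?ua ?ub ?(negPf ba) /= ?addbF.
    by apply: sep => //; apply: agree_flip.
Qed.


Lemma bool3 (x y z : bool) : x != y -> z != x -> z = y.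
Proof. by case: x; case: y; case: z. Qed.

Lemma flip2_at (x : {ffun V -> bool}) (v j : V) : flipc x [set v; j] v = ~~ x v.
Proof. by rewrite flipcE !inE eqxx addbT. Qed.

Lemma flip2_off (x : {ffun V -> bool}) (v j u : V) : u != v -> u != j -> flipc x [set v; j] u = x u.
Proof. by move=> uv uj; rewrite flipcE !inE (negPf uv) (negPf uj) addbF. Qed.

Lemma mix2_off (x z : {ffun V -> bool}) (a b u : V) : u != a -> u != b -> mix [set a; b] x z u = z u.
Proof. by move=> ua ub; rewrite mixE !inE (negPf ua) (negPf ub). Qed.

Lemma arg2 a b c v v' w1 w2 : coupledAt R w1 a b -> coupledAt R w2 b c -> a != c ->
  v != a -> v != b -> v != c -> v' != a -> v' != b -> v' != c -> v' != v -> False.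
Proof.
move=> c1 c2 ac va vb vc v'a v'b v'c v'v.
have ab : a != b by case/and4P: c1.
have bc : b != c by case/and4P: c2.
have nA : forall x u : V, u != x -> x \notin [set u] by move=> x u ua; rewrite inE eq_sym.
have ca : c != a by rewrite eq_sym.
have nv : w1 v != w2 v.
  apply/negP => /eqP e; suff e' : c = a by move: ca; rewrite e' eqxx.
  exact: (pin_nopath (hpin w1 (set1_ne0 v)) (nA _ _ va) (nA _ _ vb) (nA _ _ vc) c1 c2 (agree1 (erefl _)) (agree1 (esym e))).
have nv' : w1 v' != w2 v'.
  apply/negP => /eqP e; suff e' : c = a by move: ca; rewrite e' eqxx.
  exact: (pin_nopath (hpin w1 (set1_ne0 v')) (nA _ _ v'a) (nA _ _ v'b) (nA _ _ v'c) c1 c2 (agree1 (erefl _)) (agree1 (esym e))).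
have det1 : forall t, t \in R -> t v = w1 v -> t v' = w1 v'.
  move=> t tR tv.
  have cm := coupled_mix (set1_ne0 v) (nA _ _ va) (nA _ _ vb) c1 (agree1 (erefl _)) tR (agree1 tv).
  apply/eqP; apply: contraT => ne.
  have e2 : t v' = w2 v' by apply: bool3 nv' ne.
  suff e' : c = a by move: ca; rewrite e' eqxx.
  apply: (pin_nopath (hpin w2 (set1_ne0 v')) (nA _ _ v'a) (nA _ _ v'b) (nA _ _ v'c) cm c2 _ (agree1 (erefl _))).
  by apply: agree1; rewrite mix2_off.
have det2 : forall t, t \in R -> t v = w2 v -> t v' = w2 v'.
  move=> t tR tv.
  have cm := coupled_mix (set1_ne0 v) (nA _ _ vb) (nA _ _ vc) c2 (agree1 (erefl _)) tR (agree1 tv).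
  apply/eqP; apply: contraT => ne.
  have e2 : t v' = w1 v' by apply: bool3 (ne); rewrite eq_sym.
  suff e' : c = a by move: ca; rewrite e' eqxx.
  apply: (pin_nopath (hpin w1 (set1_ne0 v')) (nA _ _ v'a) (nA _ _ v'b) (nA _ _ v'c) c1 cm (agree1 (erefl _))).
  by apply: agree1; rewrite mix2_off.
have w1R : w1 \in R by case/and4P: c1.
have w2R : w2 \in R by case/and4P: c2.
have flipR : forall z, z \in R -> flipc z [set v; v'] \in R.
  move=> z zR.
  have [zv|zv] := boolP (z v == w1 v).
  - have zy : z v != w2 v by rewrite (eqP zv).
    have [j [zj fR]] := dm zR w2R zy.
    have [ej|nj] := eqVneq j v'; first by rewrite -ej.
    have e1 := det1 z zR (eqP zv).
    have e2 : flipc z [set v; j] v' = w2 v'.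
      apply: (det2 _ fR); rewrite flip2_at (eqP zv).
      by move: nv; case: (w1 v); case: (w2 v).
    have nj' : v' != j by rewrite eq_sym.
    by move: nv'; rewrite -e1 -e2 (flip2_off _ v'v nj') eqxx.
  - have zy : z v != w1 v by [].
    have ez : z v = w2 v by apply: bool3 nv zy.
    have [j [zj fR]] := dm zR w1R zy.
    have [ej|nj] := eqVneq j v'; first by rewrite -ej.
    have e1 := det2 z zR ez.
    have e2 : flipc z [set v; j] v' = w1 v'.
      apply: (det1 _ fR); rewrite flip2_at ez.
      by move: nv; case: (w1 v); case: (w2 v).
    have nj' : v' != j by rewrite eq_sym.
    by move: nv'; rewrite -e1 -e2 (flip2_off _ v'v nj') eqxx.
pose w2' := flipc w2 [set v; v'].
have c2' : coupledAt R w2' b c.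
  case/and4P: (c2) => _ _ fR nf; apply/and4P; split => //.
  - exact: flipR.
  - by rewrite /w2' flipcC; apply: flipR.
  - apply: contra nf => /andP[f1 f2]; apply/andP; split.
    + by rewrite -(flipcK w2 [set v; v']) flipcC; apply: flipR.
    + by rewrite -(flipcK w2 [set v; v']) flipcC; apply: flipR.
suff e' : c = a by move: ca; rewrite e' eqxx.
apply: (pin_nopath (hpin w1 (set1_ne0 v)) (nA _ _ va) (nA _ _ vb) (nA _ _ vc) c1 c2' (agree1 (erefl _))).
apply: agree1; rewrite /w2' flip2_at.
by move: nv; case: (w1 v); case: (w2 v).
Qed.


Lemma arg1 a b c v w1 w2 : coupledAt R w1 a b -> coupledAt R w2 b c -> a != c ->
  v != a -> v != b -> v != c -> (forall u, [|| u == a, u == b, u == c | u == v]) -> False.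
Proof.
move=> c1 c2 ac va vb vc cover.
have ab : a != b by case/and4P: c1.
have bc : b != c by case/and4P: c2.
have ba : b != a by rewrite eq_sym.
have cb : c != b by rewrite eq_sym.
have ca : c != a by rewrite eq_sym.
have av : a != v by rewrite eq_sym.
have bv : b != v by rewrite eq_sym.
have cv : c != v by rewrite eq_sym.
have neqs := (negPf ab, negPf ba, negPf ac, negPf ca, negPf bc, negPf cb,
              negPf av, negPf va, negPf bv, negPf vb, negPf cv, negPf vc).
have nA : forall x u : V, u != x -> x \notin [set u] by move=> x u ua; rewrite inE eq_sym.
have w1R : w1 \in R by case/and4P: c1.
have w2R : w2 \in R by case/and4P: c2.
have nv : w1 v != w2 v.
  apply/negP => /eqP e; suff e' : c = a by move: ca; rewrite e' eqxx.
  exact: (pin_nopath (hpin w1 (set1_ne0 v)) (nA _ _ va) (nA _ _ vb) (nA _ _ vc) c1 c2 (agree1 (erefl _)) (agree1 (esym e))).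
have w2v : w2 v = ~~ w1 v by move: nv; case: (w1 v); case: (w2 v).
pose y := if w2 c == w1 c then w2 else flipc w2 [set b; c].
have yR : y \in R by rewrite /y; case: ifP => _ //; case/and4P: c2.
have yc : y c = w1 c.
  rewrite /y; case: ifP => [/eqP//|/negbT ne].
  by rewrite flipcE !inE eqxx orbT; move: ne; case: (w1 c); case: (w2 c).
have yv : y v = ~~ w1 v.
  rewrite /y; case: ifP => _; first exact: w2v.
  by rewrite flipcE !inE ?neqs /= addbF.
have sepC := pin_sep (hpin w1 (set1_ne0 c)) (nA _ _ ca) (nA _ _ cb) c1 (agree1 (erefl _)).
have sepV := pin_sep (hpin w2 (set1_ne0 v)) (nA _ _ vb) (nA _ _ vc) c2 (agree1 (erefl _)).
have fabR : flipc w1 [set a; b] \in R by case/and4P: c1.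
pose m1 := flipc w1 [set v].
pose m2 := flipc (flipc w1 [set a; b]) [set v].
have m1R : m1 \in R.
  have -> : m1 = mix [set a; b] w1 y.
    apply/ffunP => u; case/or4P: (cover u) => /eqP ->; rewrite !mixE !flipcE !inE ?eqxx ?neqs //=;
    by rewrite ?yc ?yv ?addbF ?addbT.
  by apply: sepC => //; apply: agree1.
have m2R : m2 \in R.
  have -> : m2 = mix [set a; b] (flipc w1 [set a; b]) y.
    apply/ffunP => u; case/or4P: (cover u) => /eqP ->; rewrite !mixE !flipcE !inE ?eqxx ?neqs //=;
    by rewrite ?yc ?yv ?addbF ?addbT.
  by apply: sepC => //; apply: agree1; rewrite ?flipcE ?inE ?neqs ?addbF.
have m1v : m1 v = w2 v by rewrite flipcE inE eqxx w2v addbT.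
have m2v : m2 v = w2 v by rewrite !flipcE !inE eqxx ?neqs w2v addbT addbF.
have m3R : flipc (flipc w1 [set b]) [set v] \in R.
  have -> : flipc (flipc w1 [set b]) [set v] = mix [set b; c] m2 m1.
    apply/ffunP => u; case/or4P: (cover u) => /eqP ->; rewrite !mixE !flipcE !inE ?eqxx ?neqs //=;
    by rewrite ?addbF ?addbT.
  by apply: sepV => //; apply: agree1.
have m4R : flipc (flipc w1 [set a]) [set v] \in R.
  have -> : flipc (flipc w1 [set a]) [set v] = mix [set b; c] m1 m2.
    apply/ffunP => u; case/or4P: (cover u) => /eqP ->; rewrite !mixE !flipcE !inE ?eqxx ?neqs //=;
    by rewrite ?addbF ?addbT.
  by apply: sepV => //; apply: agree1.
case/and4P: c1 => _ _ _ /negP; apply; apply/andP; split.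
- have -> : flipc w1 [set a] = mix [set a; b] (flipc (flipc w1 [set a]) [set v]) w1.
    apply/ffunP => u; case/or4P: (cover u) => /eqP ->; rewrite !mixE !flipcE !inE ?eqxx ?neqs //=;
    by rewrite ?addbF ?addbT.
  by apply: sepC => //; apply: agree1; rewrite ?flipcE ?inE ?neqs ?addbF.
- have -> : flipc w1 [set b] = mix [set a; b] (flipc (flipc w1 [set b]) [set v]) w1.
    apply/ffunP => u; case/or4P: (cover u) => /eqP ->; rewrite !mixE !flipcE !inE ?eqxx ?neqs //=;
    by rewrite ?addbF ?addbT.
  by apply: sepC => //; apply: agree1; rewrite ?flipcE ?inE ?neqs ?addbF.
Qed.

End Main.

Definition pt := (bool * bool * bool)%type.
Definition bls := [:: false; true].
Definition pts : seq pt := [:: (false,false,false); (false,false,true); (false,true,false); (false,true,true); (true,false,false); (true,false,true); (true,true,false); (true,true,true)].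
Definition co (x : pt) (i : nat) : bool :=
  match i with 0 => x.1.1 | 1 => x.1.2 | _ => x.2 end.
Definition fl (x : pt) (i : nat) : pt :=
  match i with 0 => (~~ x.1.1, x.1.2, x.2) | 1 => (x.1.1, ~~ x.1.2, x.2)
  | _ => (x.1.1, x.1.2, ~~ x.2) end.
Definition fl2 (x : pt) (i j : nat) : pt := if i == j then fl x i else fl (fl x i) j.
Definition i3 := [:: 0; 1; 2].
Definition dmb (r : pt -> bool) :=
  all (fun x => all (fun y => r x ==> r y ==> all (fun i => (co x i != co y i) ==>
     has (fun j => (co x j != co y j) && r (fl2 x i j)) i3) i3) pts) pts.
Definition cpl (r : pt -> bool) i j :=
  has (fun w => [&& r w, r (fl2 w i j) & ~~ (r (fl w i) && r (fl w j))]) pts.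
Definition dist (z x : pt) := count (fun i => co x i != co z i) i3.
Definition face (r : pt -> bool) z x := r x && all (fun y => r y ==> (dist z y <= dist z x)) pts.
Definition pm (r : pt -> bool) z u := all (fun x => face r z x == (dist u x == 1)) pts.
Definition good (r : pt -> bool) :=
  dmb r ==> cpl r 0 1 ==> cpl r 1 2 ==> has (fun z => has (fun u => pm r z u) pts) pts.
Definition mkr (b : seq bool) (x : pt) : bool :=
  nth false b (4 * x.1.1 + 2 * x.1.2 + x.2).
Fixpoint allseqs (n : nat) : seq (seq bool) :=
  if n is n'.+1 then [seq b :: s | b <- bls, s <- allseqs n'] else [:: [::]].
Lemma all_good_b : all (fun s => good (mkr s)) (allseqs 8).
Proof. vm_compute. reflexivity. Qed.

Lemma mem_allseqs (s : seq bool) : s \in allseqs (size s).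
Proof.
elim: s => [|b s IH] //=.
by case: b; rewrite /= !mem_cat ?(map_f (fun s0 => true :: s0) IH) ?(map_f (fun s0 => false :: s0) IH) ?orbT.
Qed.

Lemma mem_pts (t : pt) : t \in pts.
Proof. by case: t => [[p q] s]; case: p; case: q; case: s. Qed.

Lemma good_all (r : pt -> bool) : good r.
Proof.
have -> : r = mkr (map r pts).
  by apply: FunctionalExtensionality.functional_extensionality => [[[p q] s]]; case: p; case: q; case: s.
apply: (allP all_good_b); exact: (mem_allseqs (map r pts)).
Qed.

Lemma card_I3 (P : nat -> bool) : #|[set i : 'I_3 | P i]| = count P i3.
Proof.
rewrite cardsE cardE /enum_mem size_filter -enumT.
rewrite -[i3](val_enum_ord 3) count_map; apply: eq_count => i; by rewrite /= ?inE.
Qed.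

Section Three.
Variable V : finType.
Variable R : relation V.
Hypothesis dm : delta_matroid R.
Variables (a b c : V) (w1 w2 : {ffun V -> bool}).
Hypothesis c1 : coupledAt R w1 a b.
Hypothesis c2 : coupledAt R w2 b c.
Hypothesis ac : a != c.
Hypothesis cover : forall u, [|| u == a, u == b | u == c].

Lemma ab3 : a != b. Proof. by case/and4P: c1. Qed.
Lemma bc3 : b != c. Proof. by case/and4P: c2. Qed.

Definition emb (i : nat) : V := match i with 0 => a | 1 => b | _ => c end.
Definition idx (u : V) : nat := if u == a then 0 else if u == b then 1 else 2.
Definition trip (x : {ffun V -> bool}) : pt := (x a, x b, x c).
Definition r3 (t : pt) : bool := [exists x in R, trip x == t].

Lemma neqs3 : ((a == b) = false) * ((b == a) = false) * ((a == c) = false) *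
  ((c == a) = false) * ((b == c) = false) * ((c == b) = false).
Proof.
have ab := ab3; have bc := bc3.
by rewrite !(negPf ab) !(negPf bc) !(negPf ac) eq_sym (negPf ab) eq_sym (negPf ac) eq_sym (negPf bc).
Qed.

Lemma emb_idx u : emb (idx u) = u.
Proof. by rewrite /idx; case/or3P: (cover u) => /eqP ->; rewrite ?eqxx ?neqs3. Qed.

Lemma idx_in u : idx u \in i3.
Proof. by rewrite /idx; case: ifP => //; case: ifP. Qed.

Lemma co_trip x i : co (trip x) i = x (emb i).
Proof. by case: i => [|[|i]]. Qed.

Lemma trip_inj x y : trip x = trip y -> x = y.
Proof.
case=> ea eb ec; apply/ffunP => u.
by case/or3P: (cover u) => /eqP ->.
Qed.

Lemma r3_trip x : r3 (trip x) = (x \in R).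
Proof.
apply/existsP/idP => [[y /andP[yR /eqP e]]|xR]; last by exists x; rewrite xR eqxx.
by rewrite -(trip_inj e).
Qed.

Lemma trip_surj (t : pt) : exists x, trip x = t.
Proof.
exists [ffun u => co t (idx u)]; rewrite /trip !ffunE /idx eqxx !neqs3 eqxx.
by case: t => [[p q] s].
Qed.

Lemma r3P (t : pt) : r3 t -> exists2 x, x \in R & trip x = t.
Proof. by case/existsP => x /andP[xR /eqP e]; exists x. Qed.

Lemma trip_fl x i : i \in i3 -> trip (flipc x [set emb i]) = fl (trip x) i.
Proof.
by rewrite !inE => /or3P[]/eqP->; rewrite /trip !flipcE !inE ?eqxx ?neqs3 /= ?addbT ?addbF.
Qed.

Lemma trip_fl2 x i j : i \in i3 -> j \in i3 -> trip (flipc x [set emb i; emb j]) = fl2 (trip x) i j.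
Proof.
rewrite !inE => /or3P[]/eqP-> /or3P[]/eqP->;
by rewrite /fl2 /trip !flipcE !inE ?eqxx ?neqs3 /= ?addbT ?addbF.
Qed.


Lemma idx_emb i : i < 3 -> idx (emb i) = i.
Proof. by case: i => [|[|[|i]]] //= _; rewrite /idx ?eqxx ?neqs3. Qed.

Lemma sum3 (F : V -> int) : (\sum_(v : V) F v = F a + F b + F c)%R.
Proof.
rewrite (bigD1 a) //= (bigD1 b) ?neqs3 //= (bigD1 c) ?neqs3 //= big_pred0 ?GRing.addr0 ?GRing.addrA //.
move=> u; apply/negbTE; case/or3P: (cover u) => /eqP->; rewrite ?eqxx ?neqs3 //= ?andbF //.
Qed.

Lemma coordE (zb xb : bool) : ((if zb then -1 else 1) * (xb%:R : int) = (xb != zb)%:R - zb%:R)%R.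
Proof. by case: zb; case: xb. Qed.

Lemma dmb_r3 : dmb r3.
Proof.
apply/allP => x _; apply/allP => y _; apply/implyP => /r3P[X XR eX]; apply/implyP => /r3P[Y YR eY].
apply/allP => i iI; apply/implyP => ne.
have ne' : X (emb i) != Y (emb i) by rewrite -!co_trip eX eY.
have [j [jne fR]] := dm XR YR ne'.
apply/hasP; exists (idx j); first exact: idx_in.
rewrite -eX -eY !co_trip emb_idx jne /=.
by rewrite -trip_fl2 ?idx_in // emb_idx r3_trip.
Qed.

Lemma cpl_r3 w i j : i \in i3 -> j \in i3 -> coupledAt R w (emb i) (emb j) -> cpl r3 i j.
Proof.
move=> iI jI /and4P[_ wR fR nf]; apply/hasP; exists (trip w); first exact: mem_pts.
by rewrite r3_trip wR -trip_fl2 // r3_trip fR -!trip_fl // !r3_trip.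
Qed.

Lemma three_main : exists (h : V -> int) (U : {set 'I_3}),
    equiv_rename (hmax R h) (flip_rel PM3 U).
Proof.
have cp1 : cpl r3 0 1 := @cpl_r3 w1 0 1 isT isT c1.
have cp2 : cpl r3 1 2 := @cpl_r3 w2 1 2 isT isT c2.
have := good_all r3; rewrite /good dmb_r3 cp1 cp2 !implyTb => /hasP[z _ /hasP[u _ pmu]].
pose h := fun v : V => (if co z (idx v) then -1 else 1)%R : int.
have hw : forall x, hweight h x = ((dist z (trip x))%:R - (count (fun i => co z i) i3)%:R)%R.
  move=> x; rewrite /hweight sum3 /h /idx eqxx !neqs3 /= !coordE.
  rewrite /dist /= eqxx /=.
  by case: (x a); case: (x b); case: (x c); case: (z.1.1); case: (z.1.2); case: (z.2).
exists h, [set i : 'I_3 | co u i], (fun i : 'I_3 => emb i); split.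
  exists (fun v => inord (idx v) : 'I_3).
    by move=> i; apply: val_inj; rewrite /= idx_emb // inordK.
  by move=> v; rewrite /= inordK ?emb_idx //; have := idx_in v; rewrite !inE => /or3P[]/eqP->.
apply/setP => x; rewrite !inE.
have Hx := allP pmu (trip x) (mem_pts _).
have -> : [set i : 'I_3 | flipc [ffun w : 'I_3 => x (emb w)] [set i0 : 'I_3 | co u i0] i] =
          [set i : 'I_3 | (fun n => co (trip x) n != co u n) i].
  by apply/setP => i; rewrite !inE !ffunE inE co_trip; case: (x (emb i)); case: (co u i).
rewrite (card_I3 (fun n => co (trip x) n != co u n)) -(eqP Hx) /face r3_trip; congr (_ && _).
apply/forallP/allP => [H t _|H y].
- apply/implyP => /r3P[Y YR <-].
  have := H Y; rewrite YR /= !hw.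
  by rewrite Num.Theory.lerD2r Num.Theory.ler_nat.
- apply/implyP => yR.
  have := H (trip y) (mem_pts _); rewrite r3_trip yR /= !hw.
  by rewrite Num.Theory.lerD2r Num.Theory.ler_nat.
Qed.

End Three.

Theorem mainTheorem13 (V : finType) (R : relation V) :
  delta_matroid R ->
  ~ basically_binary R ->
  (forall (D : {set V}) (a : {ffun V -> bool}),
      D != set0 -> basically_binary (pinning R D a)) ->
  exists (h : V -> int) (U : {set 'I_3}),
    equiv_rename (hmax R h) (flip_rel PM3 U).
Proof.
move=> dm nbb hpin.
have Rne : R != set0.
  by apply/negP => /eqP e; apply: nbb; apply: bb_empty.
have [H|H] := boolP [forall a, forall b, forall c, coupledb R a b ==> coupledb R b c ==> (a == c)].
  exfalso; apply: nbb; apply: (bb_of_nopath dm) Rne => a b c cab cbc.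
  move/forallP: H => /(_ a)/forallP/(_ b)/forallP/(_ c).
  by rewrite cab cbc /= => /eqP.
case/forallPn: H => a /forallPn[b /forallPn[c]].
rewrite !negb_imply => /and3P[/existsP[w1 c1] /existsP[w2 c2] ac].
have cover : forall u, [|| u == a, u == b | u == c].
  move=> u; apply: contraT; rewrite !negb_or => /and3P[ua ub uc].
  case: (pickP [pred v' | [&& v' != a, v' != b, v' != c & v' != u]]) => [v' /and4P[v'a v'b v'c v'u]|nov].
    exfalso; exact: (arg2 dm hpin c1 c2 ac ua ub uc v'a v'b v'c v'u).
  exfalso; apply: (arg1 hpin c1 c2 ac ua ub uc) => t.
  move: (nov t) => /= /negbT; rewrite !negb_and !negbK.
  by case/or4P => ->; rewrite ?orbT.
exact: (three_main dm c1 c2 ac cover).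
Qed.
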